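(* Let $K$ be a commutative unital ring, $k,n\in\mathbb{N}^*$, $\bar a,\bar b=(b_1,\dots,b_k),\bar c=(c_1,\dots,c_k)\in K^k$, $n=mk+r$ with $0\le r<k$, $d_i:=b_ic_i$, $\bar d:=(d_1,\dots,d_k)$. Suppose that for some $q\ge1$ and indices $1\le i_1<i_2<\dots<i_q\le k$ with $n>i_1$ we have $b_{i_1}=\dots=b_{i_q}=0$, or $c_{i_1}=\dots=c_{i_q}=0$. Put $i_{q+1}:=i_1+k$, $i_0:=i_q$. If $r\le i_1$ let $r':=r+k$ and $p:=0$; otherwise let $r':=r$ and let $p\in\mathbb{N}^*$ be such that $i_p<r\le i_{p+1}$. For $1\le j<q$ let $m_j:=1$ if $j<p$ and $m_j:=0$ if $j\ge p$; let $m_q:=0$ if $p>0$ or $m=0$, and $m_q:=-1$ if $p=0$. Then \[\det T^k_n(\bar a,\bar b,\bar c)=\alpha^{\bar a,-\bar d}(i_1,k)\prod_{j=1}^{q}\big(\alpha^{\bar a,-\bar d}_{i_j}(i_{j+1}-i_j,k)\big)^{m+m_j}\,\alpha^{\bar a,-\bar d}_{i_p}(r'-i_p,k).\]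
   Context: Vectors in $K^k$ are extended periodically, $-\bar d$ componentwise. $T^k_n(\bar a,\bar b,\bar c)\in M_n(K)$ is the tridiagonal matrix with diagonal $a_1,\dots,a_n$, superdiagonal $b_1,\dots,b_{n-1}$, subdiagonal $c_1,\dots,c_{n-1}$ (periodic indices), zeros elsewhere. In $P=\mathbb{Z}[x_1,\dots,x_k,y_1,\dots,y_k]$, indices are periodic; shift $f_s:=f(x_{s+1},\dots,x_{s+k},y_{s+1},\dots,y_{s+k})$; $f^{\bar a,\bar e}$ is the image under $x_i\mapsto a_i$, $y_i\mapsto e_i$, and $f_s^{\bar a,\bar e}:=(f_s)^{\bar a,\bar e}$. Write $[r]=\{1,\dots,r\}$, $S+1=\{s+1:s\in S\}$. For $0\le r\le k$, $\alpha(r,k):=\sum_{S}\prod_{i\in S}y_i\prod_{j\in[r]\setminus(S\cup(S+1))}x_j$ over subsets $S\subseteq\{1,\dots,r-1\}$ with no two consecutive integers; $\alpha(-1,k):=0$; for $r>k$, $\alpha(r,k):=x_r\alpha(r-1,k)+y_{r-1}\alpha(r-2,k)$; $\alpha_s(r,k):=(\alpha(r,k))_s$. *)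

(* Defs.v *)
From HB Require Import structures.
From mathcomp Require Import all_boot all_order all_algebra.
Set Implicit Arguments. Unset Strict Implicit. Unset Printing Implicit Defensive.
Import Order.TTheory GRing.Theory.
Local Open Scope ring_scope.

Section Defs.
Variable K : comPzRingType.

(* Periodic, 1-based extension of a vector v = (v_1,...,v_k) in K^k:
   per v i = v_{((i-1) mod k)+1}  (and per v 0 = v_k). *)
Definition per (k : nat) (v : 'I_k -> K) (i : nat) : K :=
  nth 0 [seq v j | j <- enum 'I_k] ((i + k).-1 %% k).

(* T^k_n(a,b,c) with already-periodised sequences a b c : nat -> K (1-based):
   (0-based) entry (i,i) = a_{i+1}, (i,i+1) = b_{i+1}, (i+1,i) = c_{i+1}. *)
Definition tridiag (n : nat) (a b c : nat -> K) : 'M[K]_n :=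
  \matrix_(i < n, j < n)
    if i == j :> nat then a i.+1
    else if j == i.+1 :> nat then b i.+1
    else if i == j.+1 :> nat then c j.+1
    else 0.

(* alpha(r,k) for 0 <= r <= k, evaluated at x_j := x j, y_j := y j (1-based).
   A subset S of {1..r} is encoded as S : {set 'I_r}, the ordinal u standing
   for u+1.  S must avoid r (S subset of {1..r-1}) and contain no two
   consecutive integers; the x-product is over j in [r] \ (S u (S+1)). *)
Definition alpha_le (x y : nat -> K) (r : nat) : K :=
  \sum_(S : {set 'I_r} | [forall u in S, ((val u).+1 < r)%N] &&
                        [forall u in S, forall v in S, val v != (val u).+1])
    ((\prod_(u in S) y (val u).+1) *
     \prod_(j : 'I_r | (j \notin S) && [forall u in S, val j != (val u).+1])
        x (val j).+1).

Fixpoint alpha (k : nat) (x y : nat -> K) (r : nat) {struct r} : K :=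
  match r with
  | 0 => alpha_le x y 0%N
  | r1.+1 =>
      if (r1.+1 <= k)%N then alpha_le x y r1.+1
      else x r1.+1 * alpha k x y r1 +
           y r1 * (match r1 with 0%N => 0 | r2.+1 => alpha k x y r2 end)
  end.

(* alpha^{a,e}_s(r,k): the shift x_i -> x_{s+i}, y_i -> y_{s+i}, followed by
   the evaluation x_i -> a_i, y_i -> e_i (a, e periodic, 1-based). *)
Definition alphaE (k : nat) (a e : nat -> K) (s r : nat) : K :=
  alpha k (fun t => a (s + t)) (fun t => e (s + t)) r.

End Defs.

Definition iext (k q : nat) (i : nat -> nat) (j : nat) : nat :=
  if (j == 0)%N then i q else if j == q.+1 then (i 1%N + k)%N else i j.

(* exponent m + m_j (m_j as in the paper; m_q = -1 only when p = 0 and m > 0) *)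
Definition expo (m p q j : nat) : nat :=
  if (j < q)%N then (m + (j < p))%N
  else if (0 < p)%N || (m == 0)%N then m else m.-1.

(* Main.v *)
Require Import Defs.
From HB Require Import structures.
From mathcomp Require Import all_boot all_order all_algebra.
From mathcomp Require Import zify ring.
Import Order.TTheory GRing.Theory.
Set Implicit Arguments. Unset Strict Implicit. Unset Printing Implicit Defensive.
Local Open Scope ring_scope.

Section Cont.
Variable K : comPzRingType.

Fixpoint cont (x y : nat -> K) (n : nat) : K :=
  match n with
  | 0 => 1
  | n1.+1 => match n1 with
             | 0 => x 1%N
             | n2.+1 => x n1.+1 * cont x y n1 + y n1 * cont x y n2
             end
  end.

Lemma cont_ext x x' y y' n : (forall t, x t = x' t) -> (forall t, y t = y' t) ->
  cont x y n = cont x' y' n.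
Proof.
move=> Hx Hy.
have : cont x y n = cont x' y' n /\ cont x y n.+1 = cont x' y' n.+1.
  elim: n => [|n [IH1 IH2]]; first by split => //=; rewrite Hx.
  split => //. by rewrite /= -[in LHS]/(cont x y n.+1) IH2 /= -IH1 Hx Hy.
by case.
Qed.

Lemma cont_SS x y n : cont x y n.+2 = x n.+2 * cont x y n.+1 + y n.+1 * cont x y n.
Proof. by []. Qed.

Lemma cont_split x y s L : y s = 0 ->
  cont x y (s + L) = cont x y s * cont (fun t => x (s + t)%N) (fun t => y (s + t)%N) L.
Proof.
move=> ys.
have H : forall L, cont x y (s + L) = cont x y s * cont (fun t => x (s + t)%N) (fun t => y (s + t)%N) L
  /\ cont x y (s + L.+1) = cont x y s * cont (fun t => x (s + t)%N) (fun t => y (s + t)%N) L.+1.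
  elim=> [|l [IH1 IH2]].
    split; first by rewrite addn0 /= mulr1.
    case: s ys => [|s] ys; first by rewrite /= add0n mul1r.
    by rewrite addn1 cont_SS ys mul0r addr0 mulrC /= addn1.
  split => //.
  have E1 : cont x y (s + l.+2) = x (s + l.+2)%N * cont x y (s + l.+1) + y (s + l.+1)%N * cont x y (s + l)
    by rewrite !addnS.
  rewrite E1 IH2 IH1 cont_SS /=. ring.
by case: (H L).
Qed.

Lemma det_lastcol n (M : 'M[K]_n.+1) :
  (forall i, i != ord_max -> M i ord_max = 0) ->
  \det M = M ord_max ord_max * \det (row' ord_max (col' ord_max M)).
Proof.
move=> H; rewrite (expand_det_col _ ord_max) (bigD1 ord_max) //= big1 ?addr0.
  by rewrite /cofactor -signr_odd addnn odd_double expr0 mul1r.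
by move=> i /H ->; rewrite mul0r.
Qed.

Lemma det_tridiag n0 (a b c : nat -> K) :
  \det (tridiag n0 a b c) = cont a (fun t => - (b t * c t)) n0.
Proof.
have H : forall n, \det (tridiag n a b c) = cont a (fun t => - (b t * c t)) n /\
   \det (tridiag n.+1 a b c) = cont a (fun t => - (b t * c t)) n.+1.
  elim=> [|n [IH1 IH2]].
    by split; [rewrite det_mx00 | rewrite det_mx11 /tridiag mxE].
  split => //.
  rewrite cont_SS -IH1 -IH2 (expand_det_row _ ord_max) (bigD1 ord_max) //=.
  have jnP : (n < n.+2)%N by [].
  set jn := Ordinal jnP.
  rewrite (bigD1 jn) /=; last by rewrite -val_eqE /= neq_ltn ltnSn.
  rewrite (@big1 _ 0 +%R) ?addr0; last first.
    move=> j /andP[j1 j2]; rewrite /tridiag mxE.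
    have : (val j != n.+1) && (val j != n).
      apply/andP; split.
        by apply: contra j1 => /eqP hj; apply/eqP/val_inj.
      by apply: contra j2 => /eqP hj; apply/eqP/val_inj.
    case/andP => /negPf h1 /negPf h2.
    rewrite eq_sym h1 /=.
    have -> : (val j == n.+2) = false by apply/negbTE; rewrite neq_ltn ltn_ord.
    by rewrite eqSS eq_sym h2 mul0r.
  congr (_ + _).
    rewrite /tridiag mxE eqxx /cofactor -signr_odd addnn odd_double expr0 mul1r.
    congr (_ * \det _); apply/matrixP => i j; rewrite !mxE !lift_max //.
  have -> : tridiag n.+2 a b c ord_max jn = c n.+1.
    rewrite mxE /=.
    have -> : (n.+1 == n) = false by apply/negbTE/eqP; lia.
    have -> : (n == n.+2) = false by apply/negbTE/eqP; lia.
    by rewrite eqxx.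
  rewrite /cofactor.
  rewrite (@det_lastcol n (row' ord_max (col' jn (tridiag n.+2 a b c)))); last first.
    move=> i hi; rewrite !mxE lift_max /=.
    have bn : bump n n = n.+1 by rewrite /bump leqnn add1n.
    rewrite bn.
    have hi' : (nat_of_ord i < n)%N.
      have := ltn_ord i; have : nat_of_ord i != n by apply: contra hi => /eqP h; apply/eqP/val_inj.
      move=> h1 h2; lia.
    have -> : (nat_of_ord i == n.+1) = false by apply/negbTE/eqP; lia.
    have -> : (n.+1 == (nat_of_ord i).+1) = false by apply/negbTE/eqP; lia.
    by have -> : (nat_of_ord i == n.+2) = false by apply/negbTE/eqP; lia.
  have bn : bump n n = n.+1 by rewrite /bump leqnn add1n.
  rewrite !mxE lift_max /= bn.
  have -> : (n == n.+1) = false by apply/negbTE/eqP; lia.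
  rewrite eqxx.
  have -> : \det (row' ord_max (col' ord_max (row' ord_max (col' jn (tridiag n.+2 a b c)))))
     = \det (tridiag n a b c).
    congr (\det _); apply/matrixP => i j; rewrite !mxE !lift_max /=.
    case: j => j hj /=; rewrite /= in hj.
    have bj : bump n j = j by rewrite /bump leqNgt hj.
    by rewrite !bj.
  rewrite addSn addnn -signr_odd /= odd_double /= expr1.
  ring.
by case: (H n0).
Qed.
End Cont.

Section Alpha.
Variable K : comPzRingType.
Variables x y : nat -> K.

Definition PS r (S : {set 'I_r}) (t : nat) : bool := [exists u in S, val u == t].

Lemma PS_ord r (S : {set 'I_r}) (u : 'I_r) : PS S u = (u \in S).
Proof.
apply/existsP/idP => [[v /andP[vS /eqP /val_inj <-]] // | uS].
by exists u; rewrite uS eqxx.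
Qed.

Lemma PS_lt r (S : {set 'I_r}) t : PS S t -> (t < r)%N.
Proof. by case/existsP => u /andP[_ /eqP <-]; apply: ltn_ord. Qed.

Lemma sum_split n (F : (nat -> bool) -> K) :
  (forall P Q, P =1 Q -> F P = F Q) ->
  \sum_(S : {set 'I_n.+1}) F (PS S) =
  \sum_(S : {set 'I_n}) (F (PS S) + F (fun t => (t == n) || PS S t)).
Proof.
move=> Fext.
pose w := widen_ord (leqnSn n).
have winj : injective w by move=> i j hij; apply/val_inj; exact: (congr1 val hij).
pose h (S : {set 'I_n}) : {set 'I_n.+1} := [set w i | i in S].
pose h' (T : {set 'I_n.+1}) : {set 'I_n} := [set i | w i \in T].
have hh' : forall S, h' (h S) = S.
  by move=> S; apply/setP => i; rewrite inE mem_imset.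
have wmax : forall i, w i != ord_max by move=> i; rewrite -val_eqE /= neq_ltn ltn_ord.
have maxh : forall S, ord_max \notin h S.
  by move=> S; apply/imsetP => [[i _ /eqP]]; rewrite eq_sym (negbTE (wmax i)).
have PSh : forall S, PS (h S) =1 PS S.
  move=> S t; apply/existsP/existsP => [[u /andP[/imsetP[v vS ->] /eqP <-]] | [v /andP[vS /eqP <-]]].
    by exists v; rewrite vS eqxx.
  exists (w v). rewrite /h (mem_imset _ _ winj) vS. by rewrite /w /=.
have PSh2 : forall S, PS (ord_max |: h S) =1 (fun t => (t == n) || PS S t).
  move=> S t; apply/existsP/idP.
    case=> u /andP[]; rewrite in_setU1 => /orP[/eqP -> /eqP <- | uh /eqP <-].
      by rewrite eqxx.
    by rewrite -(PSh S) PS_ord uh orbT.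
  case/orP => [/eqP -> | ].
    by exists ord_max; rewrite in_setU1 eqxx /=.
  rewrite -(PSh S); case/existsP => u /andP[uh ut]; exists u.
  by rewrite in_setU1 uh orbT.
have cover : forall T : {set 'I_n.+1}, (ord_max \notin T) -> h (h' T) = T.
  move=> T hT; apply/setP => j; case: (unliftP ord_max j) => [i ->|->].
    have -> : lift ord_max i = w i by apply/val_inj; exact: lift_max.
    by rewrite mem_imset // inE.
  by rewrite (negbTE hT) (negbTE (maxh _)).
have cover2 : forall T : {set 'I_n.+1}, (ord_max \in T) -> ord_max |: h (h' T) = T.
  move=> T hT; apply/setP => j; rewrite in_setU1; case: (unliftP ord_max j) => [i ->|->].
    have -> : lift ord_max i = w i by apply/val_inj; exact: lift_max.
    by rewrite (negbTE (wmax i)) mem_imset // inE.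
  by rewrite eqxx hT.
rewrite big_split /= (bigID (fun T : {set 'I_n.+1} => ord_max \in T)) /= addrC.
congr (_ + _).
  rewrite (reindex_onto h h' cover) /=.
  apply: eq_big => [S | S _]; first by rewrite maxh hh' eqxx.
  by apply: Fext; apply: PSh.
rewrite (reindex_onto (fun S => ord_max |: h S) h' cover2) /=.
apply: eq_big => [S | S _].
  rewrite setU11 /=; apply/eqP/setP => i; rewrite inE in_setU1 (negbTE (wmax i)) /=.
  by rewrite mem_imset.
by apply: Fext; apply: PSh2.
Qed.


Definition Vc r (P : nat -> bool) := all (fun u => P u ==> (u.+1 < r)%N && ~~ P u.+1) (iota 0 r).
Definition Tm r (P : nat -> bool) : K :=
  (\prod_(0 <= u < r | P u) y u.+1) *
  \prod_(0 <= j < r | ~~ P j && ~~ ((0 < j)%N && P j.-1)) x j.+1.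
Definition G r P := if Vc r P then Tm r P else 0.

Lemma G_ext r : forall P Q, P =1 Q -> G r P = G r Q.
Proof.
move=> P Q e; rewrite /G /Vc /Tm.
rewrite (eq_all (a2 := fun u => Q u ==> (u.+1 < r)%N && ~~ Q u.+1)); last by move=> u; rewrite !e.
case: ifP => // _; congr (_ * _); apply: eq_bigl => u; by rewrite !e.
Qed.

Lemma alpha_le_G r : alpha_le x y r = \sum_(S : {set 'I_r}) G r (PS S).
Proof.
rewrite /alpha_le big_mkcond; apply: eq_bigr => S _; rewrite /G.
have -> : [forall u in S, ((val u).+1 < r)%N] &&
          [forall u in S, forall v in S, val v != (val u).+1] = Vc r (PS S).
  apply/idP/idP.
    case/andP => /forallP H1 /forallP H2.
    apply/allP => t _; apply/implyP => /existsP [u /andP[uS /eqP ut]]; subst t.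
    rewrite (implyP (H1 u) uS) /=.
    apply/negP => /existsP[v /andP[vS /eqP vu]].
    move: (implyP (H2 u) uS) => /forallP /(_ v) /implyP /(_ vS).
    by rewrite vu eqxx.
  move/allP => H; apply/andP; split.
    apply/forallP => u; apply/implyP => uS.
    have := H u; rewrite mem_iota /= ltn_ord => /(_ isT) /implyP.
    by rewrite PS_ord uS => /(_ isT) /andP[].
  apply/forallP => u; apply/implyP => uS; apply/forallP => v; apply/implyP => vS.
  have := H u; rewrite mem_iota /= ltn_ord => /(_ isT) /implyP.
  rewrite PS_ord uS => /(_ isT) /andP[_]; apply: contra => /eqP <-.
  by rewrite PS_ord.
case: ifP => // _; rewrite /Tm; congr (_ * _).
  rewrite big_mkord; apply: eq_bigl => u; by rewrite PS_ord.
rewrite big_mkord; apply: eq_bigl => j; rewrite PS_ord; congr (_ && _).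
apply/forallP/idP.
  move=> H; apply/negP => /andP[j0 /existsP[u /andP[uS /eqP uj]]].
  move: (H u); rewrite uS /= uj; case: (val j) j0 => //= j' _.
  by rewrite eqxx.
move=> H u; apply/implyP => uS; apply: contra H => /eqP ->.
by rewrite /= PS_ord.
Qed.

Lemma prod_recr_cond n (P : pred nat) (F : nat -> K) :
  \prod_(0 <= i < n.+1 | P i) F i = (\prod_(0 <= i < n | P i) F i) * (if P n then F n else 1).
Proof. by rewrite !(big_mkcond P) big_nat_recr. Qed.

Lemma prod_cond_ext n (P1 P2 : pred nat) (F : nat -> K) :
  (forall i, (i < n)%N -> P1 i = P2 i) ->
  \prod_(0 <= i < n | P1 i) F i = \prod_(0 <= i < n | P2 i) F i.
Proof.
move=> H; rewrite (big_mkcond P1) (big_mkcond P2); apply: eq_big_nat => i /andP[_ hi]; by rewrite H.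
Qed.

Lemma Vcut r s (P : nat -> bool) : (forall t, P t -> (t < s)%N) -> (s <= r)%N ->
  Vc r P = all (fun u => P u ==> (u.+1 < r)%N && ~~ P u.+1) (iota 0 s).
Proof.
move=> hP hs; rewrite /Vc -(subnKC hs) iotaD all_cat add0n.
rewrite (_ : all _ (iota s (r - s)) = true) ?andbT //.
apply/allP => u; rewrite mem_iota => /andP[hu _]; apply/implyP => /hP; lia.
Qed.

Lemma G_A r (Q : nat -> bool) : (forall t, Q t -> (t < r)%N) -> G r.+2 Q = x r.+2 * G r.+1 Q.
Proof.
move=> hQ.
have Qr : Q r = false by apply/negbTE/negP => /hQ; lia.
have Qr1 : Q r.+1 = false by apply/negbTE/negP => /hQ; lia.
rewrite /G (@Vcut r.+2 r Q hQ (leqW (leqnSn r))) (@Vcut r.+1 r Q hQ (leqnSn r)).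
rewrite (eq_in_all (a2 := fun u => Q u ==> (u.+1 < r.+1)%N && ~~ Q u.+1)); last first.
  move=> u; rewrite mem_iota => /andP[_ hu].
  have h1 : (u.+1 < r.+2)%N by lia.
  have h2 : (u.+1 < r.+1)%N by lia.
  by rewrite h1 h2.
case: ifP => _; last by rewrite mulr0.
rewrite /Tm prod_recr_cond Qr1 mulr1 [in X in _ * X = _]prod_recr_cond Qr1 Qr /=.
ring.
Qed.

Lemma G_B r (Q : nat -> bool) : G r.+1 (fun t => (t == r) || Q t) = 0.
Proof.
rewrite /G; case: ifP => // /allP /(_ r); rewrite mem_iota add0n ltnSn eqxx /= => /(_ isT).
by rewrite ltnn.
Qed.

Lemma G_C r (Q : nat -> bool) : (forall t, Q t -> (t < r)%N) ->
  G r.+2 (fun t => (t == r) || Q t) = y r.+1 * G r Q.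
Proof.
move=> hQ.
have Qr : Q r = false by apply/negbTE/negP => /hQ; lia.
have Qr1 : Q r.+1 = false by apply/negbTE/negP => /hQ; lia.
have hP : forall t, (t == r) || Q t -> (t < r.+1)%N by move=> t /orP[/eqP -> // | /hQ]; lia.
rewrite /G (@Vcut r.+2 r.+1 _ hP (leqnSn _)) (@Vcut r r Q hQ (leqnn r)).
have ei : iota 0 r.+1 = iota 0 r ++ [:: r] by rewrite -addn1 iotaD.
have rr : (r.+1 == r) = false by apply/negbTE/eqP; lia.
rewrite ei all_cat /= eqxx /= rr Qr1 /= ltnSn /= andbT.
rewrite (eq_in_all (a2 := fun u => Q u ==> (u.+1 < r)%N && ~~ Q u.+1)); last first.
  move=> u; rewrite mem_iota add0n => /andP[_ hu].
  have ur : (u == r) = false by apply/negbTE/eqP; lia.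
  have u2 : (u.+1 < r.+2)%N by lia.
  rewrite ur u2 /=; case: (Q u) => //=.
  case h: (u.+1 < r)%N.
    by have -> : (u.+1 == r) = false by apply/negbTE/eqP; lia.
  by have -> : (u.+1 == r) = true by apply/eqP; lia.
case: ifP => _; last by rewrite mulr0.
rewrite /Tm !prod_recr_cond /= eqxx /= Qr1 (_ : (r.+1 == r) = false) /=; last by apply/negbTE/eqP; lia.
rewrite !mulr1.
rewrite (@prod_cond_ext r (fun i => (i == r) || Q i) Q); last first.
  by move=> i hi; rewrite (_ : (i == r) = false) //; apply/negbTE/eqP; lia.
rewrite (@prod_cond_ext r (fun i => ~~ ((i == r) || Q i) && ~~ ((0 < i)%N && ((i.-1 == r) || Q i.-1)))
   (fun j => ~~ Q j && ~~ ((0 < j)%N && Q j.-1))); last first.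
  move=> i hi /=.
  have -> : (i == r) = false by apply/negbTE/eqP; lia.
  by have -> : (i.-1 == r) = false by apply/negbTE/eqP; lia.
ring.
Qed.

Lemma G_false r : G r (fun _ => false) = \prod_(0 <= j < r) x j.+1.
Proof.
rewrite /G /Vc (_ : all _ _ = true); last by apply/allP.
rewrite /Tm big_pred0 // mul1r; apply: eq_bigl => j /=; by rewrite andbF.
Qed.

Lemma PS0 r : PS (set0 : {set 'I_r}) =1 (fun _ => false).
Proof. by move=> t; apply/existsP => [[u]]; rewrite inE. Qed.

Lemma alpha_le0 : alpha_le x y 0 = 1.
Proof.
rewrite alpha_le_G (big_pred1 set0); last first.
  by move=> S; rewrite /= (_ : S = set0) ?eqxx //; apply/setP => [[]].
by rewrite (G_ext 0 (PS0 0)) G_false big_geq.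
Qed.

Lemma alpha_le1 : alpha_le x y 1 = x 1%N.
Proof.
rewrite alpha_le_G (@sum_split 0 (G 1)); last exact: G_ext.
rewrite (big_pred1 set0); last first.
  by move=> S; rewrite /= (_ : S = set0) ?eqxx //; apply/setP => [[]].
by rewrite G_B addr0 (G_ext 1 (PS0 0)) G_false big_nat1.
Qed.

Lemma alpha_le_rec r : alpha_le x y r.+2 = x r.+2 * alpha_le x y r.+1 + y r.+1 * alpha_le x y r.
Proof.
rewrite !alpha_le_G.
have H1 : \sum_(S : {set 'I_r.+2}) G r.+2 (PS S) =
   \sum_(S : {set 'I_r}) (x r.+2 * G r.+1 (PS S) + y r.+1 * G r (PS S)).
  rewrite (@sum_split r.+1 (G r.+2)); last exact: G_ext.
  rewrite (eq_bigr (fun S => G r.+2 (PS S))); last by move=> S _; rewrite G_B addr0.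
  rewrite (@sum_split r (G r.+2)); last exact: G_ext.
  apply: eq_bigr => S _; rewrite G_A ?G_C //; exact: PS_lt.
have H2 : \sum_(S : {set 'I_r.+1}) G r.+1 (PS S) = \sum_(S : {set 'I_r}) G r.+1 (PS S).
  rewrite (@sum_split r (G r.+1)); last exact: G_ext.
  by apply: eq_bigr => S _; rewrite G_B addr0.
by rewrite H1 H2 big_split /= -!mulr_sumr.
Qed.

Lemma alpha_le_cont r : alpha_le x y r = cont x y r.
Proof.
have H : forall r, alpha_le x y r = cont x y r /\ alpha_le x y r.+1 = cont x y r.+1.
  elim=> [|n [IH1 IH2]]; first by rewrite alpha_le0 alpha_le1.
  by split => //; rewrite alpha_le_rec cont_SS IH1 IH2.
by case: (H r).
Qed.

Lemma alpha_cont k r : alpha k x y r = cont x y r.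
Proof.
have H : forall r, alpha k x y r = cont x y r /\ alpha k x y r.+1 = cont x y r.+1.
  elim=> [|n [IH1 IH2]].
    split; first by rewrite /= alpha_le0.
    rewrite /=; case: ifP => _; first by rewrite alpha_le1.
    by rewrite alpha_le0 mulr0 addr0 mulr1.
  split; first exact: IH2.
  have -> : alpha k x y n.+2 = if (n.+2 <= k)%N then alpha_le x y n.+2
     else x n.+2 * alpha k x y n.+1 + y n.+1 * alpha k x y n by [].
  rewrite cont_SS -IH1 -IH2; case: ifP => _ //.
  by rewrite alpha_le_cont cont_SS IH1 IH2.
by case: (H r).
Qed.

End Alpha.

Section Blocks.
Variable K : comPzRingType.
Variables X Y : nat -> K.

Definition Fb s L := cont (fun t => X (s + t)%N) (fun t => Y (s + t)%N) L.

Lemma Fb_split s L1 L2 : Y (s + L1)%N = 0 -> Fb s (L1 + L2) = Fb s L1 * Fb (s + L1) L2.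
Proof.
move=> hY; rewrite /Fb cont_split //; congr (_ * _).
by apply: cont_ext => t; rewrite addnA.
Qed.

Lemma Fb_period k s L : (forall t, X (t + k)%N = X t) -> (forall t, Y (t + k)%N = Y t) ->
  Fb (s + k) L = Fb s L.
Proof.
move=> hX hY; rewrite /Fb; apply: cont_ext => t.
  by rewrite -addnA (addnC k) addnA hX.
by rewrite -addnA (addnC k) addnA hY.
Qed.

Lemma Fb0 L : Fb 0 L = cont X Y L.
Proof. by rewrite /Fb; apply: cont_ext. Qed.

Lemma blocks (ii : nat -> nat) q :
  (forall j, (1 <= j <= q)%N -> (ii j < ii j.+1)%N) ->
  (forall j, (1 <= j <= q.+1)%N -> Y (ii j) = 0) ->
  forall J, (1 <= J <= q.+1)%N -> (ii 1 <= ii J)%N /\ forall L,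
    Fb (ii 1) ((ii J - ii 1) + L) =
    (\prod_(1 <= j < J) Fb (ii j) (ii j.+1 - ii j)) * Fb (ii J) L.
Proof.
move=> mono hY; elim=> [//|J IH] /andP[_ hJ].
case: J IH hJ => [|J] IH hJ.
  split => // L; by rewrite subnn add0n big_geq // mul1r.
have [ge H] := IH (ltnW hJ).
have mJ := mono J.+1 hJ.
split; first by lia.
move=> L.
have -> : (ii J.+2 - ii 1 + L = (ii J.+1 - ii 1) + ((ii J.+2 - ii J.+1) + L))%N by lia.
rewrite H Fb_split; last first.
  by rewrite (_ : (ii J.+1 + (ii J.+2 - ii J.+1) = ii J.+2)%N) ?hY //; lia.
rewrite (_ : (ii J.+1 + (ii J.+2 - ii J.+1) = ii J.+2)%N); last by lia.
by rewrite [in RHS]big_nat_recr //= mulrA.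
Qed.

End Blocks.

Unset Implicit Arguments.
Set Strict Implicit.

Theorem corollary5p6 (K : comPzRingType) (k n : nat) (a b c : 'I_k -> K)
    (m r q : nat) (i : nat -> nat) (p : nat) :
  (0 < k)%N -> (0 < n)%N ->
  n = (m * k + r)%N -> (r < k)%N ->
  (1 <= q)%N ->
  (1 <= i 1)%N -> (forall j, (1 <= j < q)%N -> (i j < i j.+1)%N) -> (i q <= k)%N ->
  (i 1%N < n)%N ->
  ((forall j, (1 <= j <= q)%N -> per b (i j) = 0) \/
   (forall j, (1 <= j <= q)%N -> per c (i j) = 0)) ->
  (if (r <= i 1)%N then p = 0%N
   else (0 < p <= q)%N /\ (iext k q i p < r <= iext k q i p.+1)%N) ->
  let e : 'I_k -> K := fun j => - (b j * c j) in
  let r' := if (r <= i 1)%N then (r + k)%N else r in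
  \det (tridiag n (per a) (per b) (per c)) =
    alphaE k (per a) (per e) 0%N (i 1%N)
    * (\prod_(1 <= j < q.+1)
         (alphaE k (per a) (per e) (iext k q i j)
                 (iext k q i j.+1 - iext k q i j)) ^+ (expo m p q j))
    * alphaE k (per a) (per e) (iext k q i p) (r' - iext k q i p).
Proof.
move=> k0 n0 hn hr hq hi1 hmono hiq hi1n hbc hp e r'.
have x0 : 'I_k := Ordinal k0.
have per_nth : forall (v : 'I_k -> K) t, per v t = v (nth x0 (enum 'I_k) ((t + k).-1 %% k)).
  move=> v t; rewrite /per (nth_map x0) // size_enum_ord ltn_pmod //.
have perY : forall t, per e t = -(per b t * per c t) by move=> t; rewrite !per_nth.
have perP : forall (v : 'I_k -> K) t s, per v (t + s * k)%N = per v t.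
  move=> v t s; rewrite !per_nth.
  have -> : ((t + s * k + k).-1 = s * k + (t + k).-1)%N by lia.
  by rewrite modnMDl.
have hX : forall t, per a (t + k)%N = per a t.
  by move=> t; have := perP a t 1%N; rewrite mul1n.
have hY : forall t, per e (t + k)%N = per e t.
  by move=> t; have := perP e t 1%N; rewrite mul1n.
have Yi : forall j s, (1 <= j <= q)%N -> per e (i j + s * k)%N = 0.
  move=> j s hj; rewrite perY !perP; case: hbc => h; rewrite h //.
    by rewrite mul0r oppr0.
  by rewrite mulr0 oppr0.
set X := per a; set Y := per e.
set ii := iext k q i.
have ii1 : ii 1%N = i 1%N.
  rewrite /ii /iext /=; have -> : (1 == q.+1)%N = false by apply/negbTE/eqP; lia.
  by [].
have iij : forall j, (1 <= j <= q)%N -> ii j = i j.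
  move=> j hj; rewrite /ii /iext.
  have -> : (j == 0)%N = false by apply/negbTE/eqP; lia.
  by have -> : (j == q.+1)%N = false by apply/negbTE/eqP; lia.
have iiq1 : ii q.+1 = (i 1%N + k)%N by rewrite /ii /iext /= eqxx.
have ii0 : ii 0%N = i q by [].
have mono : forall j, (1 <= j <= q)%N -> (ii j < ii j.+1)%N.
  move=> j /andP[j1 jq]; case: (ltngtP j q) jq => // [jq _|-> _].
    rewrite !iij ?hmono ?j1 //; lia.
  rewrite iij ?iiq1 ?hq ?leqnn //; lia.
have hYii : forall j, (1 <= j <= q.+1)%N -> Y (ii j) = 0.
  move=> j /andP[j1 jq]; case: (ltngtP j q.+1) jq => // [jq _|-> _].
    by rewrite iij ?j1 // /Y -[i j]addn0 -(mul0n k) Yi // j1.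
  rewrite iiq1 /Y; have := Yi 1%N 1%N; rewrite mul1n; apply; by rewrite leqnn hq.
have B := @blocks K X Y ii q mono hYii.
set P := \prod_(1 <= j < q.+1) Fb X Y (ii j) (ii j.+1 - ii j)%N.
have Per : forall t L, Fb X Y (ii 1%N) (t * k + L)%N = P ^+ t * Fb X Y (ii 1%N) L.
  elim=> [|t IH] L; first by rewrite mul0n add0n expr0 mul1r.
  have [_ HB] := B q.+1 (leqnn _).
  have -> : (t.+1 * k + L = (ii q.+1 - ii 1%N) + (t * k + L))%N by rewrite iiq1 ii1 mulSn; lia.
  by rewrite HB iiq1 Fb_period // -ii1 IH exprS mulrA.
have aF : forall s L0, alphaE k X Y s L0 = Fb X Y s L0 by move=> s L0; rewrite /alphaE alpha_cont.
rewrite det_tridiag.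
have -> : cont X (fun t => - (per b t * per c t)) n = cont X Y n.
  by apply: cont_ext => // t; rewrite /Y perY.
rewrite -Fb0 !aF.
rewrite (eq_bigr (fun j => Fb X Y (ii j) (ii j.+1 - ii j)%N ^+ expo m p q j)); last by move=> j _; rewrite aF.
move: hp; rewrite /r'; case: (leqP r (i 1%N)) => hr1 hp.
  subst p.
  case: m hn => [|m] hn; first by rewrite mul0n add0n in hn; lia.
  rewrite mulSn in hn.
  have [geq HBq] := B q (introT andP (conj hq (leqW (leqnn _)))).
  have iqq := iij q (introT andP (conj hq (leqnn q))).
  have -> : n = (i 1%N + (m * k + ((ii q - ii 1%N) + (r + k - ii q))))%N.
    by rewrite iqq; rewrite ii1 in geq *; lia.
  rewrite Fb_split ?add0n; last by rewrite ?add0n /Y; have := Yi 1%N 0%N; rewrite mul0n addn0; apply; rewrite leqnn hq.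
  rewrite -ii1 Per HBq.
  rewrite (@eq_big_nat _ _ _ 1 q.+1 _ (fun j => Fb X Y (ii j) (ii j.+1 - ii j)%N ^+ (if (j < q)%N then m.+1 else m))); last first.
    move=> j _; rewrite /expo ltn0 addn0 /=.
    by case: ifP.
  rewrite big_nat_recr //= ltnn.
  rewrite [in RHS](@eq_big_nat _ _ _ 1 q _ (fun j => Fb X Y (ii j) (ii j.+1 - ii j)%N ^+ m.+1)); last first.
    by move=> j /andP[_ ->].
  rewrite prodrXl /P big_nat_recr //= ii0 -iqq.
  rewrite exprMn !exprS.
  ring.
case: hp => /andP[p0 pq] /andP[hpr hrp].
rewrite -/ii in hpr hrp.
have [gep HBp] := B p (introT andP (conj p0 (leqW pq))).
have -> : n = (i 1%N + (m * k + ((ii p - ii 1%N) + (r - ii p))))%N by rewrite ii1 in gep *; lia.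
rewrite Fb_split ?add0n; last by rewrite ?add0n /Y; have := Yi 1%N 0%N; rewrite mul0n addn0; apply; rewrite leqnn hq.
rewrite -ii1 Per HBp.
rewrite (@eq_big_nat _ _ _ 1 q.+1 _ (fun j => Fb X Y (ii j) (ii j.+1 - ii j)%N ^+ m * Fb X Y (ii j) (ii j.+1 - ii j)%N ^+ (j < p))); last first.
  move=> j /andP[_ jq]; rewrite /expo -exprD p0 /=.
  case: ifP => // jq'.
  have -> : (j < p)%N = false by apply/negbTE; rewrite -leqNgt; lia.
  by rewrite addn0.
rewrite big_split /= prodrXl -/P [in RHS](big_cat_nat _ (n := p)) //=; try lia.
rewrite [X in _ * (_ * (_ * X)) * _](@eq_big_nat _ _ _ p q.+1 _ (fun _ => 1)); last first.
  move=> j /andP[jp _]; have -> : (j < p)%N = false by apply/negbTE; rewrite -leqNgt.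
  by rewrite expr0.
rewrite big1_eq mulr1.
rewrite [in RHS](@eq_big_nat _ _ _ 1 p _ (fun j => Fb X Y (ii j) (ii j.+1 - ii j)%N)); last first.
  by move=> j /andP[_ ->]; rewrite expr1.
ring.
Qed.
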